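(* There exist constants $c_3,c_4>0$ such that for every Dobrushin $\mathbb{H}$-domain $(\mathcal{D},a,b)$: (i) if $d_1(0)$ denotes the distance between the origin and the wired arc, then $\mathbf{HM}_\bullet(B_0)\le c_3\,\dfrac{1}{d_1(0)}$; (ii) if the segment $l_n(k)=\{k\}\times\llbracket0,n\rrbracket$ disconnects the wired arc from the origin inside $\mathcal{D}$, then $\mathbf{HM}_\bullet(B_0)\le c_4\,\dfrac{n}{|k|^2}$.
   Context: $\llbracket s,t\rrbracket=[s,t]\cap\mathbb{Z}$; $\mathbb{H}=\{(x_1,x_2)\in\mathbb{Z}^2:x_2\ge0\}$. A Dobrushin domain $(\mathcal{D},a,b)$ is a subgraph of $\mathbb{Z}^2$ (possibly infinite here) bounded by a self-avoiding boundary curve of boundary edges, with two boundary vertices $a,b$; the free arc is the counterclockwise boundary arc from $a$ to $b$, the wired arc the one from $b$ to $a$. It is a Dobrushin $\mathbb{H}$-domain if its medial graph is contained in the medial lattice of $\mathbb{H}$ and the origin lies on the free arc. Medial lattice: vertices of $\mathbb{Z}^2$ are black, vertices of $(\tfrac12,\tfrac12)+\mathbb{Z}^2$ are white; each is replaced by the diamond $\{z:|\mathrm{Re}(z-v)|+|\mathrm{Im}(z-v)|\le1/2\}$. Two black faces are adjacent if the corresponding primal vertices are neighbours. $\mathcal{D}_\diamond$ consists of the diamonds intersecting the interior of the domain together with the white diamonds touching the free arc; these white diamonds form the free arc of $\mathcal{D}_\diamond$ and the black diamonds of the wired-arc vertices form its wired arc. The extended domain adds a layer of white diamonds adjacent to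 the black diamonds of the wired arc and a layer of black diamonds adjacent to the white diamonds of the free arc (as new faces). $X^B_\bullet$ is the continuous-time random walk on black faces started at $B$, jumping at rate $1$ to adjacent black faces except at rate $\rho=(\sqrt2+1)/2$ to adjacent added black faces; $\mathbf{HM}_\bullet(B)$ is the probability that it hits the wired arc before the added black layer. $B_0$ is the black diamond of the origin. *)

(* Defs.v *)
From HB Require Import structures.
From mathcomp Require Import all_boot all_order all_algebra.
From mathcomp Require Import all_classical all_reals.
From mathcomp Require Import Rstruct.
Set Implicit Arguments.
Unset Strict Implicit.
Unset Printing Implicit Defensive.
Import Order.TTheory GRing.Theory Num.Theory.
Local Open Scope classical_set_scope.
Local Open Scope ring_scope.

Definition R := Rdefinitions.R.

(* Points of Z^2: primal vertices (black faces of the medial lattice).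
   A face (unit square) is indexed by its lower-left corner g, i.e. it is
   [g.1, g.1+1] x [g.2, g.2+1]; its white diamond is centred at g+(1/2,1/2). *)
Definition Z2 := (int * int)%type.

Definition origin : Z2 := (0%R, 0%R).

Definition nbr (u v : Z2) : bool := (`|u.1 - v.1|%N + `|u.2 - v.2|%N == 1)%N.

Definition nbrs (u : Z2) : seq Z2 :=
  [:: (u.1 + 1, u.2); (u.1 - 1, u.2); (u.1, u.2 + 1); (u.1, u.2 - 1)].

Definition corner (g v : Z2) : Prop :=
  v = g \/ v = (g.1 + 1, g.2) \/ v = (g.1, g.2 + 1) \/ v = (g.1 + 1, g.2 + 1).

(* A domain is given by its (possibly infinite) set F of faces; the region is
   the union of the closed faces.  Oriented boundary edge u -> w: an edge of
   Z^2 with exactly one adjacent face in F, oriented so that F is on the left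
   (counterclockwise orientation of the boundary of the domain). *)
Definition bedge (F : set Z2) (u w : Z2) : Prop :=
  [\/ w = (u.1 + 1, u.2) /\ F (u.1, u.2) /\ ~ F (u.1, u.2 - 1),
      w = (u.1 - 1, u.2) /\ F (u.1 - 1, u.2 - 1) /\ ~ F (u.1 - 1, u.2),
      w = (u.1, u.2 - 1) /\ F (u.1, u.2 - 1) /\ ~ F (u.1 - 1, u.2 - 1) |
      w = (u.1, u.2 + 1) /\ F (u.1 - 1, u.2) /\ ~ F (u.1, u.2)].

Definition bd (F : set Z2) (u : Z2) : Prop := exists w, bedge F u w.

Fixpoint bsteps (F : set Z2) (n : nat) (u v : Z2) : Prop :=
  match n with
  | 0 => u = v
  | n.+1 => exists w, bedge F u w /\ bsteps F n w v
  end.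

Definition breach (F : set Z2) (u v : Z2) : Prop := exists n, bsteps F n u v.

(* Oriented edge u -> w lies on the counterclockwise boundary arc from p to q.
   Either q is reached from p along the boundary (first time after k steps)
   and the arc consists of the first k edges, or (infinite boundary, q lies
   "behind" p) the arc goes from p to infinity and comes back to q. *)
Definition arcE (F : set Z2) (p q u w : Z2) : Prop :=
  bedge F u w /\
  ((exists k, bsteps F k p q /\ (forall i, (i < k)%N -> ~ bsteps F i p q) /\
      exists j, (j < k)%N /\ bsteps F j p u)
   \/ (~ breach F p q /\ (breach F p u \/ breach F w q))).

Definition arcV (F : set Z2) (p q v : Z2) : Prop :=
  v = p \/ v = q \/ exists w, arcE F p q v w \/ arcE F p q w v.

(* vertices of the domain = black faces of D_diamond *)
Definition Vb (F : set Z2) : set Z2 := [set v | exists g, F g /\ corner g v].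

Record dobrushinH (F : set Z2) (a b : Z2) : Prop := {
  dh_simple : forall u w1 w2, bedge F u w1 -> bedge F u w2 -> w1 = w2;
  dh_connected : forall u v, bd F u -> bd F v -> breach F u v \/ breach F v u;
  dh_a : bd F a;
  dh_b : bd F b;
  dh_ab : a <> b;
  dh_H : forall v, Vb F v -> 0 <= v.2;
  dh_origin : arcV F a b origin }.

Definition wired (F : set Z2) (a b : Z2) : set Z2 := [set v | arcV F b a v].

(* added black layer: black diamonds adjacent to white diamonds of the free
   arc (faces adjacent to an edge of the free arc), not already in D_diamond *)
Definition added (F : set Z2) (a b : Z2) : set Z2 :=
  [set v | ~ Vb F v /\ exists g u w, arcE F a b u w /\ corner g u /\
                                     corner g w /\ corner g v].

Definition rho : R := (Num.sqrt 2 + 1) / 2.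

Definition rate (F : set Z2) (a b : Z2) (C : Z2) : R :=
  if `[< Vb F C >] then 1 else if `[< added F a b C >] then rho else 0.

(* hstep n B = probability that the walk started at B hits the wired arc
   before the added layer within n jumps (embedded jump chain of X^B) *)
Fixpoint hstep (F : set Z2) (a b : Z2) (n : nat) (B : Z2) : R :=
  if `[< wired F a b B >] then 1 else
  match n with
  | 0 => 0
  | n.+1 =>
    if `[< Vb F B >] then
      let tot := \sum_(C <- nbrs B) rate F a b C in
      \sum_(C <- nbrs B) (rate F a b C / tot) * hstep F a b n C
    else 0
  end.

Definition HM (F : set Z2) (a b : Z2) (B : Z2) : R :=
  sup (range (fun n => hstep F a b n B)).

Definition dist0 (v : Z2) : R := Num.sqrt ((v.1)%:~R ^+ 2 + (v.2)%:~R ^+ 2).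
Definition d1 (F : set Z2) (a b : Z2) : R := inf (dist0 @` wired F a b).

Definition in_seg (n : nat) (k : int) (v : Z2) : bool :=
  (v.1 == k) && (0 <= v.2 <= n%:Z).

Definition disconnects (F : set Z2) (a b : Z2) (n : nat) (k : int) : Prop :=
  forall s : seq Z2,
    (forall v, v \in origin :: s -> Vb F v) ->
    path nbr origin s ->
    wired F a b (last origin s) ->
    has (in_seg n k) (origin :: s).

(* Main.v *)
Require Import Defs.
From mathcomp Require Import all_boot all_order all_algebra.
From mathcomp Require Import all_classical all_reals Rstruct.
From mathcomp Require Import ring lra zify.
Import Order.TTheory GRing.Theory Num.Theory.
Local Open Scope ring_scope.

Section Comb.
Variable F : set Z2.

Lemma bedge_out (x y : int) w : bedge F (x,y) w <->
  [\/ w = (x+1,y) /\ F (x,y) /\ ~ F (x,y-1),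
      w = (x-1,y) /\ F (x-1,y-1) /\ ~ F (x-1,y),
      w = (x,y-1) /\ F (x,y-1) /\ ~ F (x-1,y-1) |
      w = (x,y+1) /\ F (x-1,y) /\ ~ F (x,y)].
Proof. by []. Qed.

Lemma bedge_in (x y : int) u : bedge F u (x,y) <->
  [\/ u = (x-1,y) /\ F (x-1,y) /\ ~ F (x-1,y-1),
      u = (x+1,y) /\ F (x,y-1) /\ ~ F (x,y),
      u = (x,y+1) /\ F (x,y) /\ ~ F (x-1,y) |
      u = (x,y-1) /\ F (x-1,y-1) /\ ~ F (x,y-1)].
Proof.
case: u => ux uy; split.
- case=> [][E [H1 H2]]; case: E => -> ->.
  + by apply: Or41; rewrite addrK.
  + by apply: Or42; rewrite subrK.
  + by apply: Or43; rewrite subrK.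
  + by apply: Or44; rewrite addrK.
- case=> [][E [H1 H2]]; case: E => -> ->.
  + by apply: Or41; rewrite subrK.
  + by apply: Or42; rewrite addrK.
  + by apply: Or43; rewrite addrK.
  + by apply: Or44; rewrite subrK.
Qed.

Lemma outR x y : F (x,y) -> ~ F (x,y-1) -> bedge F (x,y) (x+1,y).
Proof. by move=> *; apply/bedge_out; apply: Or41. Qed.
Lemma outL x y : F (x-1,y-1) -> ~ F (x-1,y) -> bedge F (x,y) (x-1,y).
Proof. by move=> *; apply/bedge_out; apply: Or42. Qed.
Lemma outD x y : F (x,y-1) -> ~ F (x-1,y-1) -> bedge F (x,y) (x,y-1).
Proof. by move=> *; apply/bedge_out; apply: Or43. Qed.
Lemma outU x y : F (x-1,y) -> ~ F (x,y) -> bedge F (x,y) (x,y+1).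
Proof. by move=> *; apply/bedge_out; apply: Or44. Qed.
Lemma inL x y : F (x-1,y) -> ~ F (x-1,y-1) -> bedge F (x-1,y) (x,y).
Proof. by move=> *; apply/bedge_in; apply: Or41. Qed.
Lemma inR x y : F (x,y-1) -> ~ F (x,y) -> bedge F (x+1,y) (x,y).
Proof. by move=> *; apply/bedge_in; apply: Or42. Qed.
Lemma inU x y : F (x,y) -> ~ F (x-1,y) -> bedge F (x,y+1) (x,y).
Proof. by move=> *; apply/bedge_in; apply: Or43. Qed.
Lemma inD x y : F (x-1,y-1) -> ~ F (x,y-1) -> bedge F (x,y-1) (x,y).
Proof. by move=> *; apply/bedge_in; apply: Or44. Qed.

Lemma in_of_out x y w : bedge F (x,y) w -> exists u, bedge F u (x,y).
Proof.
move/bedge_out => H.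
have [p0|p0] := pselect (F (x,y)); have [p1|p1] := pselect (F (x-1,y));
have [p2|p2] := pselect (F (x-1,y-1)); have [p3|p3] := pselect (F (x,y-1));
first [ by eexists; apply: inL | by eexists; apply: inR | by eexists; apply: inU
      | by eexists; apply: inD | by case: H => [][_ []] ].
Qed.

Lemma out_of_in x y u : bedge F u (x,y) -> exists w, bedge F (x,y) w.
Proof.
move/bedge_in => H.
have [p0|p0] := pselect (F (x,y)); have [p1|p1] := pselect (F (x-1,y));
have [p2|p2] := pselect (F (x-1,y-1)); have [p3|p3] := pselect (F (x,y-1));
first [ by eexists; apply: outL | by eexists; apply: outR | by eexists; apply: outU
      | by eexists; apply: outD | by case: H => [][_ []] ].
Qed.

Hypothesis Hs : forall u w1 w2, bedge F u w1 -> bedge F u w2 -> w1 = w2.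

Ltac twoouts x y :=
  let h := fresh "h" in
  first [ have h := Hs _ _ _ (outR x y ltac:(eassumption) ltac:(eassumption)) (outU x y ltac:(eassumption) ltac:(eassumption))
        | have h := Hs _ _ _ (outR x y ltac:(eassumption) ltac:(eassumption)) (outL x y ltac:(eassumption) ltac:(eassumption))
        | have h := Hs _ _ _ (outR x y ltac:(eassumption) ltac:(eassumption)) (outD x y ltac:(eassumption) ltac:(eassumption))
        | have h := Hs _ _ _ (outU x y ltac:(eassumption) ltac:(eassumption)) (outL x y ltac:(eassumption) ltac:(eassumption))
        | have h := Hs _ _ _ (outU x y ltac:(eassumption) ltac:(eassumption)) (outD x y ltac:(eassumption) ltac:(eassumption))
        | have h := Hs _ _ _ (outL x y ltac:(eassumption) ltac:(eassumption)) (outD x y ltac:(eassumption) ltac:(eassumption)) ];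
  injection h; intros; lia.

Lemma bedge_inj x y u1 u2 : bedge F u1 (x,y) -> bedge F u2 (x,y) -> u1 = u2.
Proof.
move=> /bedge_in H1 /bedge_in H2.
have [p0|p0] := pselect (F (x,y)); have [p1|p1] := pselect (F (x-1,y));
have [p2|p2] := pselect (F (x-1,y-1)); have [p3|p3] := pselect (F (x,y-1));
case: H1 => [][-> [? ?]]; case: H2 => [][-> [? ?]]; try done; try (exfalso; by []);
exfalso; twoouts x y.
Qed.


Lemma bedge_inj' u1 u2 v : bedge F u1 v -> bedge F u2 v -> u1 = u2.
Proof. by case: v => x y; apply: bedge_inj. Qed.

End Comb.

Set Implicit Arguments.
Unset Strict Implicit.

Lemma in_of_out' F v w : bedge F v w -> exists u, bedge F u v.
Proof. by case: v => x y; apply: in_of_out. Qed.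

Lemma minP (P : nat -> Prop) : (exists n, P n) -> exists n, P n /\ forall i, (i < n)%N -> ~ P i.
Proof.
case=> n; elim/ltn_ind: n => n IH Pn.
case: (pselect (exists i, (i < n)%N /\ P i)) => [[i [lin Pi]]|h].
- exact: IH lin Pi.
- exists n; split=> // i lin Pi; apply: h; by exists i.
Qed.

Section Steps.
Variable F : set Z2.

Lemma bsteps_add i j p x y : bsteps F i p x -> bsteps F j x y -> bsteps F (i + j)%N p y.
Proof.
elim: i p => [|i IH] p /=; first by move=> ->.
by case=> w [e h] h2; exists w; split=> //; apply: IH.
Qed.

Lemma bsteps_split i j p y : bsteps F (i + j)%N p y -> exists x, bsteps F i p x /\ bsteps F j x y.
Proof.
elim: i p => [|i IH] p /=; first by move=> h; exists p.
case=> w [e h]; have [x [h1 h2]] := IH _ h; exists x; split=> //; by exists w.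
Qed.

Lemma bsteps_last i p y : bsteps F i.+1 p y -> exists x, bsteps F i p x /\ bedge F x y.
Proof.
rewrite -addn1 => /bsteps_split [x [h1 [w [e <-]]]]; by exists x.
Qed.

Lemma bsteps_iter N m p : bsteps F N p p -> bsteps F (m * N)%N p p.
Proof.
move=> h; elim: m => [|m IH] /=; first by [].
by rewrite mulSn; apply: bsteps_add h IH.
Qed.

Hypothesis Hs : forall u w1 w2, bedge F u w1 -> bedge F u w2 -> w1 = w2.

Lemma bsteps_det i p x y : bsteps F i p x -> bsteps F i p y -> x = y.
Proof.
elim: i p => [|i IH] p /=; first by move=> <- <-.
case=> w [e h] [w' [e' h']]; have ew := Hs e e'; subst w'; exact: IH h h'.
Qed.

Lemma bsteps_back i x y p : bsteps F i x p -> bsteps F i y p -> x = y.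
Proof.
elim: i p => [|i IH] p; first by move=> /= -> ->.
move=> /bsteps_last [z [h1 e1]] /bsteps_last [z' [h2 e2]].
have ez := @bedge_inj' F Hs _ _ _ e1 e2; subst z'; exact: IH h1 h2.
Qed.

End Steps.

Section Arcs.
Variables (F : set Z2) (a b : Z2).
Hypothesis D : dobrushinH F a b.

Let Hs := dh_simple D.

Lemma bsteps0_ab k : bsteps F k a b -> k <> 0%N.
Proof. by move=> h k0; subst k; apply: (dh_ab D). Qed.
Lemma bsteps0_ba k : bsteps F k b a -> k <> 0%N.
Proof. by move=> h k0; subst k; apply: (dh_ab D). Qed.

Lemma edge_arcs u w : bedge F u w -> arcE F a b u w \/ arcE F b a u w.
Proof.
move=> e; have bu : bd F u by exists w.
case: (pselect (breach F a b)) => [hab | nab].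
- have [k [hk kmin]] := minP hab.
  case: (pselect (breach F a u)) => [hau | nau].
  + have [j [hj jmin]] := minP hau.
    case: (ltnP j k) => jk.
    * left; split=> //; left; exists k; split=> //; split=> //; by exists j.
    * right; split=> //.
      move: hj; rewrite -(subnKC jk) => /bsteps_split [x [hx1 hx2]].
      have ex := bsteps_det Hs hx1 hk; subst x.
      case: (pselect (breach F b a)) => [hba | nba].
      - have [k' [hk' k'min]] := minP hba.
        left; exists k'; split=> //; split=> //; exists (j - k)%N; split=> //.
        rewrite ltnNge; apply/negP => kl.
        move: hx2; rewrite -(subnKC kl) => /bsteps_split [x [hy1 hx3]].
        have ex := bsteps_det Hs hy1 hk'; subst x.
        have := bsteps0_ba hk'.
        have := jmin (j - k - k')%N; move: (jk) => jk' h1 h2.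
        apply: h1 hx3.
        have : (0 < k')%N by case: (k') h2.
        have : (0 < k)%N by case: (k) (bsteps0_ab hk).
        lia.
      - right; split=> //; left; by exists (j - k)%N.
  + have bua : breach F u a.
      case: (dh_connected D bu (dh_a D)) => // h.
    right; split=> //.
    case: (pselect (breach F b a)) => [[k1 hk1] | nba].
    * exfalso; case: bua => m hm.
      have hN := bsteps_add hk hk1.
      have hmN := bsteps_iter m hN.
      have kpos : (0 < k)%N by case: (k) (bsteps0_ab hk).
      have le : (m <= m * (k + k1))%N.
        by rewrite -{1}(muln1 m) leq_mul2l; apply/orP; right; rewrite addn_gt0 kpos.
      move: hmN; rewrite -(subnK le) => /bsteps_split [x [hx1 hx2]].
      have ex := bsteps_back Hs hx2 hm; subst x.
      apply: nau; by eexists; exact hx1.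
    * right; split=> //; right.
      case: bua => [[|m]] /= hm.
      - subst u; exfalso; apply: nau; by exists 0%N.
      - case: hm => w' [e' hm]; have ew := Hs e e'; subst w'; by exists m.
- case: (pselect (breach F a u \/ breach F w b)) => [h | h].
  + left; split=> //; by right.
  + right.
    have nau : ~ breach F a u by move=> h'; apply: h; left.
    have nwb : ~ breach F w b by move=> h'; apply: h; right.
    have bba : breach F b a.
      by case: (dh_connected D (dh_a D) (dh_b D)).
    have [k' [hk' k'min]] := minP bba.
    split=> //; left; exists k'; split=> //; split=> //.
    case: (dh_connected D bu (dh_b D)) => [[m hm] | [j hj]].
    * case: m hm => [|m] /= hm.
      - subst u; exists 0%N; split=> //; by case: (k') (bsteps0_ba hk').
      - case: hm => w' [e' hm]; have ew := Hs e e'; subst w'.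
        exfalso; apply: nwb; by exists m.
    * exists j; split=> //.
      rewrite ltnNge; apply/negP => kl.
      move: hj; rewrite -(subnKC kl) => /bsteps_split [x [hx1 hx2]].
      have ex := bsteps_det Hs hx1 hk'; subst x.
      apply: nau; by eexists; exact hx2.
Qed.


Ltac cor := rewrite /corner /=; first
  [ by left; congr (_,_); lia
  | by right; left; congr (_,_); lia
  | by right; right; left; congr (_,_); lia
  | by right; right; right; congr (_,_); lia ].

Lemma bedge_Vb u w : bedge F u w -> Vb F u /\ Vb F w.
Proof.
case: u => x y /bedge_out; case => [][-> [h _]].
- by split; exists (x,y); split=> //; cor.
- by split; exists (x-1,y-1); split=> //; cor.
- by split; exists (x,y-1); split=> //; cor.
- by split; exists (x-1,y); split=> //; cor.
Qed.

Lemma bd_Vb v : bd F v -> Vb F v.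
Proof. by case=> w /bedge_Vb []. Qed.

Lemma wired_Vb v : wired F a b v -> Vb F v.
Proof.
case=> [->|[->|[w [[e _]|[e _]]]]].
- exact: bd_Vb (dh_b D).
- exact: bd_Vb (dh_a D).
- by case: (bedge_Vb e).
- by case: (bedge_Vb e).
Qed.

Lemma wired_nbr v : wired F a b v -> exists W, wired F a b W /\ (bedge F v W \/ bedge F W v).
Proof.
case=> [->|[->|[w [h|h]]]].
- case: (dh_b D) => w e; exists w; split; last by left.
  right; right; exists b; right; split=> //.
  case: (pselect (breach F b a)) => [hba|nba].
  + have [k' [hk' kmin]] := minP hba.
    left; exists k'; split=> //; split=> //; exists 0%N; split=> //.
    by case: (k') (bsteps0_ba hk').
  + by right; split=> //; left; exists 0%N.
- case: (pselect (breach F b a)) => [hba|nba].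
  + have [k' [hk' kmin]] := minP hba.
    case: k' hk' kmin => [|k] hk kmin; first by case: (bsteps0_ba hk).
    have [x [hx e]] := bsteps_last hk.
    exists x; split; last by right.
    right; right; exists a; left; split=> //.
    left; exists k.+1; split=> //; split=> //; by exists k.
  + case: (dh_a D) => w0 e0; have [u e] := in_of_out' e0.
    exists u; split; last by right.
    right; right; exists a; left; split=> //.
    by right; split=> //; right; exists 0%N.
- exists w; split; last by left; case: h.
  by right; right; exists v; right.
- exists w; split; last by right; case: h.
  by right; right; exists v; left.
Qed.

Lemma edge_free u w : bedge F u w -> (~ wired F a b u \/ ~ wired F a b w) -> arcE F a b u w.
Proof.
move=> e nw; case: (edge_arcs e) => // h; exfalso.
case: nw; apply.
- by right; right; exists w; left.
- by right; right; exists u; right.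
Qed.

Lemma Vb_cases x y : Vb F (x,y) -> [\/ F (x,y), F (x-1,y), F (x,y-1) | F (x-1,y-1)].
Proof.
case=> [[gx gy]] [h]; rewrite /corner /=.
case=> [[-> ->]|[[-> ->]|[[-> ->]|[-> ->]]]].
- exact: Or41.
- by apply: Or42; rewrite addrK.
- by apply: Or43; rewrite addrK.
- by apply: Or44; rewrite !addrK.
Qed.

Lemma notVb v g : ~ Vb F v -> corner g v -> ~ F g.
Proof. by move=> nv c fg; apply: nv; exists g. Qed.

Lemma added_nbr x y C : Vb F (x,y) -> ~ wired F a b (x,y) -> C \in nbrs (x,y) -> ~ Vb F C ->
  added F a b C.
Proof.
move=> vB nwB; rewrite /nbrs !inE /= => hC nC; split=> //.
case/Vb_cases: vB => hB.
-
  case/or4P: hC => /eqP E; subst C.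
  + exfalso; apply: (notVb nC (g:=(x,y))) => //; cor.
  + have n1 : ~ F (x-1,y) by apply: (notVb nC); cor.
    have n2 : ~ F (x-1,y-1) by apply: (notVb nC); cor.
    have e := @inU F _ _ hB n1.
    exists (x-1,y), (x,y+1), (x,y); split; first by apply: edge_free e _; right.
    split; [cor | split; cor].
  + exfalso; apply: (notVb nC (g:=(x,y))) => //; cor.
  + have n1 : ~ F (x,y-1) by apply: (notVb nC); cor.
    have n2 : ~ F (x-1,y-1) by apply: (notVb nC); cor.
    have e := @outR F _ _ hB n1.
    exists (x,y-1), (x,y), (x+1,y); split; first by apply: edge_free e _; left.
    split; [cor | split; cor].
-
  case/or4P: hC => /eqP E; subst C.
  + have n1 : ~ F (x,y) by apply: (notVb nC); cor.
    have n2 : ~ F (x,y-1) by apply: (notVb nC); cor.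
    have e := @outU F _ _ hB n1.
    exists (x,y), (x,y), (x,y+1); split; first by apply: edge_free e _; left.
    split; [cor | split; cor].
  + exfalso; apply: (notVb nC (g:=(x-1,y))) => //; cor.
  + exfalso; apply: (notVb nC (g:=(x-1,y))) => //; cor.
  + have n1 : ~ F (x,y-1) by apply: (notVb nC); cor.
    have n2 : ~ F (x-1,y-1) by apply: (notVb nC); cor.
    have e := @inL F _ _ hB n2.
    exists (x-1,y-1), (x-1,y), (x,y); split; first by apply: edge_free e _; right.
    split; [cor | split; cor].
-
  case/or4P: hC => /eqP E; subst C.
  + exfalso; apply: (notVb nC (g:=(x,y-1))) => //; cor.
  + have n1 : ~ F (x-1,y) by apply: (notVb nC); cor.
    have n2 : ~ F (x-1,y-1) by apply: (notVb nC); cor.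
    have e := @outD F _ _ hB n2.
    exists (x-1,y-1), (x,y), (x,y-1); split; first by apply: edge_free e _; left.
    split; [cor | split; cor].
  + have n1 : ~ F (x,y) by apply: (notVb nC); cor.
    have n2 : ~ F (x-1,y) by apply: (notVb nC); cor.
    have e := @inR F _ _ hB n1.
    exists (x,y), (x+1,y), (x,y); split; first by apply: edge_free e _; right.
    split; [cor | split; cor].
  + exfalso; apply: (notVb nC (g:=(x,y-1))) => //; cor.
-
  case/or4P: hC => /eqP E; subst C.
  + have n1 : ~ F (x,y) by apply: (notVb nC); cor.
    have n2 : ~ F (x,y-1) by apply: (notVb nC); cor.
    have e := @inD F _ _ hB n2.
    exists (x,y-1), (x,y-1), (x,y); split; first by apply: edge_free e _; right.
    split; [cor | split; cor].
  + exfalso; apply: (notVb nC (g:=(x-1,y-1))) => //; cor.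
  + have n1 : ~ F (x-1,y) by apply: (notVb nC); cor.
    have n2 : ~ F (x,y) by apply: (notVb nC); cor.
    have e := @outL F _ _ hB n1.
    exists (x-1,y), (x,y), (x-1,y); split; first by apply: edge_free e _; left.
    split; [cor | split; cor].
  + exfalso; apply: (notVb nC (g:=(x-1,y-1))) => //; cor.
Qed.

End Arcs.
Definition fr (X Y : R) : R := Y / (X ^+ 2 + Y ^+ 2 + 3).

Lemma fr_ge0 X Y : 0 <= Y -> 0 <= fr X Y.
Proof. move=> hY; rewrite /fr divr_ge0 //; nra. Qed.

Lemma fr_super X Y : 0 <= Y ->
  fr (X+1) Y + fr (X-1) Y + fr X (Y+1) + fr X (Y-1) <= 4 * fr X Y.
Proof.
move=> hY.
have d0 : 0 < X ^+ 2 + Y ^+ 2 + 3 by nra.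
have d1 : 0 < (X+1) ^+ 2 + Y ^+ 2 + 3 by nra.
have d2 : 0 < (X-1) ^+ 2 + Y ^+ 2 + 3 by nra.
have d3 : 0 < X ^+ 2 + (Y+1) ^+ 2 + 3 by nra.
have d4 : 0 < X ^+ 2 + (Y-1) ^+ 2 + 3 by nra.
set P := 2*X^+4 + 10*Y^+4 + 44*X^+2*Y^+2 + 72*X^+2 + 96*Y^+2 + 224.
have E : fr (X+1) Y + fr (X-1) Y + fr X (Y+1) + fr X (Y-1) - 4 * fr X Y =
   - (2 * Y * P) / (((X+1) ^+ 2 + Y ^+ 2 + 3) * ((X-1) ^+ 2 + Y ^+ 2 + 3) *
        (X ^+ 2 + (Y+1) ^+ 2 + 3) * (X ^+ 2 + (Y-1) ^+ 2 + 3) * (X ^+ 2 + Y ^+ 2 + 3)).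
  rewrite /fr /P; field.
  by rewrite (gt_eqF d0) (gt_eqF d1) (gt_eqF d2) (gt_eqF d3) (gt_eqF d4).
have hP : 0 <= P by rewrite /P; nra.
have H : 0 <= (2 * Y * P) / (((X+1) ^+ 2 + Y ^+ 2 + 3) * ((X-1) ^+ 2 + Y ^+ 2 + 3) *
        (X ^+ 2 + (Y+1) ^+ 2 + 3) * (X ^+ 2 + (Y-1) ^+ 2 + 3) * (X ^+ 2 + Y ^+ 2 + 3)).
  apply: divr_ge0; first by apply: mulr_ge0 => //; apply: mulr_ge0.
  by repeat apply: mulr_ge0; apply: ltW.
move: E; rewrite mulNr; lra.
Qed.

Definition gR (d X Y : R) : R := (8*d*Y + 2*X^+2 - 2*Y^+2) / d^+2.

Lemma gR_harm d X Y : 0 < d ->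
  gR d (X+1) Y + gR d (X-1) Y + gR d X (Y+1) + gR d X (Y-1) = 4 * gR d X Y.
Proof. move=> hd; rewrite /gR; field; by rewrite gt_eqF. Qed.

Lemma gR_ge0 d X Y : 8 < d -> 0 <= Y -> Y <= d + 2 -> 0 <= gR d X Y.
Proof. move=> hd h1 h2; rewrite /gR divr_ge0 //; nra. Qed.

Lemma gR_ge1 d X y : 8 < d -> 0 <= y -> y <= d + 1 -> d^+2 <= X^+2 + y^+2 -> 1 <= gR d X (y+1).
Proof.
move=> hd h1 h2 h3; rewrite /gR ler_pdivlMr; last by nra.
rewrite mul1r; nra.
Qed.

Lemma gR_origin d : 8 < d -> gR d 0 1 <= 8 / d.
Proof.
move=> hd; rewrite /gR ler_pdivrMr; last by nra.
have -> : 8 / d * d ^+ 2 = 8 * d by field; rewrite gt_eqF //; lra.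
nra.
Qed.

Lemma seg_ge1 (N y : R) : 1 <= N -> 0 <= y -> y <= N -> 1 <= 4 * N * fr 0 (y+1).
Proof.
move=> h1 h2 h3; rewrite /fr mulrA ler_pdivlMr; last by nra.
rewrite mul1r; nra.
Qed.

Lemma fr_origin (N K : R) : 0 <= N -> 1 <= K ^+ 2 -> 4 * N * fr (0 - K) (0 + 1) <= 4 * (N / K ^+ 2).
Proof.
move=> h1 h2.
have e : fr (0 - K) (0 + 1) = (K ^+ 2 + 4)^-1.
  by rewrite /fr add0r sub0r sqrrN expr1n mul1r; congr (_^-1); lra.
rewrite e mulrA ler_pdivlMr; last by lra.
have t0 : 0 < (K ^+ 2 + 4)^-1 by rewrite invr_gt0; lra.
have t1 : (K ^+ 2 + 4)^-1 * (K ^+ 2 + 4) = 1 by rewrite mulVf // gt_eqF //; lra.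
nra.
Qed.

Lemma rho_ge1 : 1 <= rho.
Proof.
rewrite /rho ler_pdivlMr // mul1r.
have : 1 <= Num.sqrt (2 : R) by rewrite -{1}sqrtr1; apply: ler_wsqrtr; lra.
lra.
Qed.

Section Walk.
Variables (F : set Z2) (a b : Z2).
Hypothesis D : dobrushinH F a b.

Lemma sum4 (f : Z2 -> R) B : \sum_(C <- nbrs B) f C =
  f (B.1+1,B.2) + f (B.1-1,B.2) + f (B.1,B.2+1) + f (B.1,B.2-1).
Proof. by rewrite /nbrs !big_cons big_nil addr0 !addrA. Qed.

Lemma rate_ge0 C : 0 <= rate F a b C.
Proof. rewrite /rate; case: ifP => _ //; case: ifP => _ //; have := rho_ge1; lra. Qed.

Lemma hstep_nonVb n C : ~ Vb F C -> hstep F a b n C = 0.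
Proof.
move=> nv; have nw : ~ wired F a b C by move/(wired_Vb D).
case: n => [|n] /=; rewrite (asboolF nw) //; by rewrite (asboolF nv).
Qed.

Lemma hstep_01 n B : 0 <= hstep F a b n B <= 1.
Proof.
elim: n B => [|n IH] B /=.
  by case: ifP => _; apply/andP; split; rewrite ?lexx ?ler01.
case: ifP => _; first by apply/andP; split; rewrite ?lexx ?ler01.
case: ifP => _; last by apply/andP; split; rewrite ?lexx ?ler01.
set tot := \sum_(C <- nbrs B) rate F a b C.
have t0 : 0 <= tot by apply: sumr_ge0 => C _; apply: rate_ge0.
have ti : 0 <= tot^-1 by rewrite invr_ge0.
apply/andP; split.
  apply: sumr_ge0 => C _; apply: mulr_ge0; first by apply: mulr_ge0 => //; apply: rate_ge0.
  by case/andP: (IH C).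
apply: (@le_trans _ _ (\sum_(C <- nbrs B) rate F a b C / tot)).
  apply: ler_sum => C _; rewrite -[X in _ <= X]mulr1; apply: ler_wpM2l.
    by apply: mulr_ge0 => //; apply: rate_ge0.
  by case/andP: (IH C).
rewrite -mulr_suml -/tot.
have [->|tn] := eqVneq tot 0; first by rewrite invr0 mulr0 ler01.
by rewrite mulfV.
Qed.

Lemma tot_ge4 x y : Vb F (x,y) -> ~ wired F a b (x,y) -> 4 <= \sum_(C <- nbrs (x,y)) rate F a b C.
Proof.
move=> vB nw.
have h : forall C, C \in nbrs (x,y) -> 1 <= rate F a b C.
  move=> C hC; rewrite /rate; case: (pselect (Vb F C)) => v.
    by rewrite (asboolT v).
  rewrite (asboolF v) (asboolT (added_nbr D vB nw hC v)); exact: rho_ge1.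
rewrite sum4 /=.
have h1 : 1 <= rate F a b (x+1,y) by apply: h; rewrite /nbrs inE eqxx.
have h2 : 1 <= rate F a b (x-1,y) by apply: h; rewrite /nbrs !inE eqxx orbT.
have h3 : 1 <= rate F a b (x,y+1) by apply: h; rewrite /nbrs !inE eqxx !orbT.
have h4 : 1 <= rate F a b (x,y-1) by apply: h; rewrite /nbrs !inE eqxx !orbT.
lra.
Qed.

Lemma term_le tot C hC fC : 0 <= tot -> (Vb F C -> hC <= fC) -> (~ Vb F C -> hC = 0) ->
  rate F a b C / tot * hC <= (if `[< Vb F C >] then fC else 0) / tot.
Proof.
move=> t0 h1 h2; have ti : 0 <= tot^-1 by rewrite invr_ge0.
rewrite /rate; case: (pselect (Vb F C)) => v.
  by rewrite (asboolT v) mul1r mulrC; apply: ler_wpM2r => //; apply: h1.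
by rewrite (asboolF v) h2 // mulr0 mul0r.
Qed.

Lemma hstep_cmp (Q : Z2 -> Prop) (f : Z2 -> R) :
  (forall B, Q B -> 1 <= f B \/
     [/\ ~ wired F a b B, 0 <= f B &
        (Vb F B -> (forall C, C \in nbrs B -> Vb F C -> Q C) /\
          \sum_(C <- nbrs B) (if `[< Vb F C >] then f C else 0) <=
          (\sum_(C <- nbrs B) rate F a b C) * f B)]) ->
  forall n B, Q B -> hstep F a b n B <= f B.
Proof.
move=> H n; elim: n => [|n IH] B QB.
  case: (H B QB) => [h1|[nw f0 _]].
    by case/andP: (hstep_01 0 B) => _ h; apply: le_trans h h1.
  by rewrite /= (asboolF nw).
case: (H B QB) => [h1|[nw f0 hV]].
  by case/andP: (hstep_01 n.+1 B) => _ h; apply: le_trans h h1.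
rewrite /= (asboolF nw).
case: (pselect (Vb F B)) => vB; last by rewrite (asboolF vB).
rewrite (asboolT vB).
case: (hV vB) => hQ hsum.
set tot := \sum_(C <- nbrs B) rate F a b C.
have t0 : 0 <= tot by apply: sumr_ge0 => C _; apply: rate_ge0.
have key : forall C, C \in nbrs B -> rate F a b C / tot * hstep F a b n C <=
     (if `[< Vb F C >] then f C else 0) / tot.
  move=> C hC; apply: term_le => // [vC|]; last exact: hstep_nonVb.
  by apply: IH; apply: hQ.
apply: (@le_trans _ _ (\sum_(C <- nbrs B) (if `[< Vb F C >] then f C else 0) / tot)).
  rewrite big_seq [X in _ <= X]big_seq; apply: ler_sum => C hC; exact: key.
rewrite -mulr_suml.
have [->|tn] := eqVneq tot 0; first by rewrite invr0 mulr0.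
rewrite ler_pdivrMr; last by rewrite lt_def tn t0.
by rewrite mulrC.
Qed.

Lemma HM_le M : (forall n, hstep F a b n origin <= M) -> HM F a b origin <= M.
Proof.
move=> h; apply: ge_sup; first by exists (hstep F a b 0 origin), 0%N.
by move=> _ [n _ <-].
Qed.

End Walk.

Ltac cor := rewrite /corner /=; first
  [ by left; congr (_,_); lia
  | by right; left; congr (_,_); lia
  | by right; right; left; congr (_,_); lia
  | by right; right; right; congr (_,_); lia ].

Section Final.
Variables (F : set Z2) (a b : Z2).
Hypothesis D : dobrushinH F a b.

Lemma Vb_y v : Vb F v -> 0 <= v.2.
Proof. exact: dh_H D v. Qed.

Lemma Fy g : F g -> 0 <= g.2.
Proof. by move=> h; apply: Vb_y; exists g; split=> //; left. Qed.

Lemma Vb_up x : Vb F (x,0) -> Vb F (x,1).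
Proof.
case/Vb_cases => h.
- by exists (x,0); split=> //; cor.
- by exists (x-1,0); split=> //; cor.
- by move: (Fy h) => /=; lia.
- by move: (Fy h) => /=; lia.
Qed.

Lemma origin_Vb : Vb F origin.
Proof.
case: (dh_origin D) => [->|[->|[w [[e _]|[e _]]]]].
- exact: bd_Vb (dh_a D).
- exact: bd_Vb (dh_b D).
- by case: (bedge_Vb e).
- by case: (bedge_Vb e).
Qed.

Definition r2 (v : Z2) : R := (v.1)%:~R ^+ 2 + (v.2)%:~R ^+ 2.

Lemma wired_far v : wired F a b v -> 0 <= d1 F a b -> (d1 F a b) ^+ 2 <= r2 v.
Proof.
move=> hv hd.
have lb : has_lbound (dist0 @` wired F a b).
  by exists 0 => _ [u _ <-]; apply: sqrtr_ge0.
have h : d1 F a b <= dist0 v by apply: (ge_inf lb); exists v.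
have := ler_pM hd hd h h; rewrite -!expr2 /dist0 sqr_sqrtr //.
by apply: addr_ge0; apply: sqr_ge0.
Qed.

Section Part1.
Variable d : R.
Hypothesis hd : 8 < d.
Hypothesis hw : forall v, wired F a b v -> d ^+ 2 <= r2 v.

Definition f1 (B : Z2) : R :=
  if d ^+ 2 <= r2 B then 1 else if B.2 < 0 then 0 else gR d (B.1)%:~R ((B.2)%:~R + 1).

Lemma pc (C : Z2) cx cy (y : R) : (C.1)%:~R = cx -> (C.2)%:~R = cy ->
  -1 <= cy -> cy <= y + 1 -> y < d ->
  (if `[< Vb F C >] then f1 C else 0) <= gR d cx (cy + 1).
Proof.
have hd2 := hd.
move=> ex ey h1 h2 h3.
case: (pselect (Vb F C)) => v; last first.
  by rewrite (asboolF v); apply: gR_ge0 => //; lra.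
rewrite (asboolT v) /f1.
have c0 : 0 <= cy by rewrite -ey ler0z; apply: Vb_y.
case: ifP => hr.
  rewrite -ex; apply: gR_ge1 => //; first lra.
  by move: hr; rewrite /r2 ey.
have -> : (C.2 < 0) = false by apply/negbTE; rewrite -leNgt; apply: Vb_y.
by rewrite ex ey.
Qed.

Lemma part1_cond B : 1 <= f1 B \/
     [/\ ~ wired F a b B, 0 <= f1 B &
        (Vb F B -> (forall C, C \in nbrs B -> Vb F C -> setT C) /\
          \sum_(C <- nbrs B) (if `[< Vb F C >] then f1 C else 0) <=
          (\sum_(C <- nbrs B) rate F a b C) * f1 B)].
Proof.
have hd2 := hd.
case hr: (d ^+ 2 <= r2 B); first by left; rewrite /f1 hr.
right.
have nw : ~ wired F a b B by move/hw => h; move: hr; rewrite h.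
case hy: (B.2 < 0).
  have -> : f1 B = 0 by rewrite /f1 hr hy.
  split=> //; move/Vb_y => h; move: hy; rewrite ltNge h //.
have -> : f1 B = gR d (B.1)%:~R ((B.2)%:~R + 1) by rewrite /f1 hr hy.
case: B nw hr hy => x y nw hr hy /=.
move: hr; rewrite /r2 /= => /negbT; rewrite -ltNge => hr.
have hy' : 0 <= (y%:~R : R) by rewrite ler0z; move/negbT: hy; rewrite /= -leNgt.
have hX := sqr_ge0 (x%:~R : R).
have hYd0 : 0 <= (y%:~R : R) + d by lra.
have hYd : (y%:~R : R) < d by rewrite ltNge; apply/negP => hc; nra.
split=> //; first by apply: gR_ge0 => //; lra.
move=> vB; split=> //.
rewrite sum4 /=.
have t1 := pc (C:=(x+1,y)) (cx:=x%:~R+1) (cy:=y%:~R) (y:=y%:~R) ltac:(by rewrite /= intrD) erefl ltac:(lra) ltac:(lra) hYd.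
have t2 := pc (C:=(x-1,y)) (cx:=x%:~R-1) (cy:=y%:~R) (y:=y%:~R) ltac:(by rewrite /= intrB) erefl ltac:(lra) ltac:(lra) hYd.
have t3 := pc (C:=(x,y+1)) (cx:=x%:~R) (cy:=y%:~R+1) (y:=y%:~R) erefl ltac:(by rewrite /= intrD) ltac:(lra) ltac:(lra) hYd.
have t4 := pc (C:=(x,y-1)) (cx:=x%:~R) (cy:=y%:~R-1) (y:=y%:~R) erefl ltac:(by rewrite /= intrB) ltac:(lra) ltac:(lra) hYd.
have hh := @gR_harm d (x%:~R) (y%:~R+1) ltac:(lra).
have e2 : (y%:~R : R) - 1 + 1 = y%:~R + 1 - 1 by ring.
rewrite e2 in t4.
have g0 : 0 <= gR d x%:~R (y%:~R + 1) by apply: gR_ge0 => //; lra.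
have t := tot_ge4 D vB nw.
have s4 : (if `[< Vb F (x + 1, y) >] then f1 (x + 1, y) else 0) + (if `[< Vb F (x - 1, y) >] then f1 (x - 1, y) else 0) + (if `[< Vb F (x, y + 1) >] then f1 (x, y + 1) else 0) + (if `[< Vb F (x, y - 1) >] then f1 (x, y - 1) else 0) <= 4 * gR d x%:~R (y%:~R + 1).
  rewrite -hh; apply: lerD; [apply: lerD; [apply: lerD|]|] => //.
exact: le_trans s4 (ler_wpM2r g0 t).
Qed.

Lemma part1_bound : HM F a b origin <= 8 / d.
Proof.
have hd2 := hd.
apply: HM_le => n.
apply: le_trans (hstep_cmp D (Q := setT) (f := f1) (fun B _ => part1_cond B) n I) _.
rewrite /f1 /r2 /=.
have -> : (d ^+ 2 <= (0:int)%:~R ^+ 2 + (0:int)%:~R ^+ 2) = false.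
  by apply/negbTE; rewrite -ltNge /= expr0n /= addr0; nra.
have e0 : ((0:int)%:~R : R) = 0 by []. rewrite e0 add0r. exact: gR_origin.
Qed.

End Part1.

Lemma part1 : 0 < d1 F a b -> HM F a b origin <= 8 / d1 F a b.
Proof.
move=> hd.
case: (lerP (d1 F a b) 8) => h8.
  apply: HM_le => n.
  case/andP: (hstep_01 F a b n origin) => _ h; apply: le_trans h _.
  by rewrite ler_pdivlMr // mul1r.
apply: part1_bound => // v hv; apply: wired_far => //; exact: ltW.
Qed.


Definition Sreach (n : nat) (k : int) (B : Z2) : Prop :=
  exists s : seq Z2, (forall v, v \in origin :: s -> Vb F v) /\ path nbr origin s /\
    last origin s = B /\ ~~ has (in_seg n k) (origin :: s).

Lemma S_ext n k B C : Sreach n k B -> Vb F C -> nbr B C -> ~~ in_seg n k C -> Sreach n k C.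
Proof.
case=> s [hv [hp [hl hh]]] vC nBC nsC; exists (rcons s C); split.
  by move=> v; rewrite -rcons_cons mem_rcons inE => /orP [/eqP -> // | /hv].
split; first by rewrite rcons_path hp hl.
split; first by rewrite last_rcons.
by rewrite -rcons_cons has_rcons negb_or nsC.
Qed.

Lemma S_Vb n k B : Sreach n k B -> Vb F B.
Proof. by case=> s [hv [_ [<- _]]]; apply: hv; apply: mem_last. Qed.

Lemma S_noseg n k B : Sreach n k B -> ~~ in_seg n k B.
Proof.
case=> s [_ [_ [<- hh]]]; apply/negP => h; move/negP: hh; apply.
by apply/hasP; exists (last origin s) => //; apply: mem_last.
Qed.

Lemma S_nw n k B : disconnects F a b n k -> Sreach n k B -> ~ wired F a b B.
Proof.
move=> hd [s [hv [hp [<- hh]]]] hw.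
by move/negP: hh; apply; apply: hd.
Qed.

Lemma S_origin n k : k != 0 -> Sreach n k origin.
Proof.
move=> hk; exists [::]; split; first by move=> v; rewrite inE => /eqP ->; apply: origin_Vb.
split=> //; split=> //=; rewrite orbF /in_seg /= eq_sym.
by rewrite (negbTE hk).
Qed.

Lemma nbr_of_mem B C : C \in nbrs B -> nbr B C.
Proof.
case: B => x y; rewrite /nbrs !inE => /or4P [] /eqP -> /=; rewrite /nbr /=; apply/eqP; lia.
Qed.

Lemma bedge_mem u w : bedge F u w -> w \in nbrs u.
Proof.
case: u => x y /bedge_out; case=> [][-> _]; rewrite /nbrs !inE eqxx ?orbT //.
Qed.

Definition f2 (n : nat) (k : int) (B : Z2) : R :=
  4 * n%:R * fr ((B.1)%:~R - k%:~R) ((B.2)%:~R + 1).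

Lemma pc2 n k (C : Z2) cx cy : (C.1)%:~R - k%:~R = cx -> (C.2)%:~R + 1 = cy -> 0 <= cy ->
  (if `[< Vb F C >] then f2 n k C else 0) <= 4 * n%:R * fr cx cy.
Proof.
move=> ex ey h; have hn : (0 : R) <= n%:R by apply: ler0n.
have f0 : 0 <= 4 * n%:R * fr cx cy by apply: mulr_ge0; [lra | apply: fr_ge0].
case: (pselect (Vb F C)) => v; last by rewrite (asboolF v).
by rewrite (asboolT v) /f2 ex ey.
Qed.

Lemma part2_cond n k : (1 <= n)%N -> k != 0 -> disconnects F a b n k -> forall B,
  Sreach n k B \/ (in_seg n k B /\ Vb F B) -> 1 <= f2 n k B \/
     [/\ ~ wired F a b B, 0 <= f2 n k B &
        (Vb F B -> (forall C, C \in nbrs B -> Vb F C ->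
                     Sreach n k C \/ (in_seg n k C /\ Vb F C)) /\
          \sum_(C <- nbrs B) (if `[< Vb F C >] then f2 n k C else 0) <=
          (\sum_(C <- nbrs B) rate F a b C) * f2 n k B)].
Proof.
move=> n1 hk hd [x y] [hS | [hs vB]]; last first.
  left; move: hs; rewrite /in_seg /= => /andP [/eqP -> /andP [h1 h2]].
  rewrite /f2 /= subrr; apply: seg_ge1.
  - by rewrite ler1n.
  - by rewrite ler0z.
  - by move: h2; rewrite -(ler_int R) pmulrn.
right.
have vB := S_Vb hS.
have hy : (0 : R) <= y%:~R by rewrite ler0z; apply: (Vb_y vB).
have hn : (0 : R) <= n%:R by apply: ler0n.
have f0 : 0 <= f2 n k (x,y) by apply: mulr_ge0; [lra | apply: fr_ge0; lra].
split=> //; first exact: S_nw hd hS.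
move=> _; split.
  move=> C hC vC; case hsC: (in_seg n k C); first by right.
  by left; apply: S_ext hS vC (nbr_of_mem hC) _; rewrite hsC.
rewrite sum4 /=.
set X : R := x%:~R - k%:~R; set Y : R := y%:~R + 1.
have t1 := @pc2 n k (x+1,y) (X+1) Y ltac:(by rewrite /= intrD /X; ring) erefl ltac:(rewrite /Y; lra).
have t2 := @pc2 n k (x-1,y) (X-1) Y ltac:(by rewrite /= intrB /X; ring) erefl ltac:(rewrite /Y; lra).
have t3 := @pc2 n k (x,y+1) X (Y+1) erefl ltac:(by rewrite /= intrD /Y) ltac:(rewrite /Y; lra).
have t4 := @pc2 n k (x,y-1) X (Y-1) erefl ltac:(by rewrite /= intrB /Y; ring) ltac:(rewrite /Y; lra).
have hs := fr_super X (ltac:(rewrite /Y; lra) : 0 <= Y).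
have t := tot_ge4 D vB (S_nw hd hS).
have e : f2 n k (x,y) = 4 * n%:R * fr X Y by [].
rewrite e; rewrite e in f0.
have s4 : (if `[< Vb F (x + 1, y) >] then f2 n k (x + 1, y) else 0) +
  (if `[< Vb F (x - 1, y) >] then f2 n k (x - 1, y) else 0) +
  (if `[< Vb F (x, y + 1) >] then f2 n k (x, y + 1) else 0) +
  (if `[< Vb F (x, y - 1) >] then f2 n k (x, y - 1) else 0) <= 4 * (4 * n%:R * fr X Y).
  apply: le_trans (_ : _ <= 4 * n%:R * (fr (X+1) Y + fr (X-1) Y + fr X (Y+1) + fr X (Y-1))) _.
    rewrite !mulrDr; apply: lerD; [apply: lerD; [apply: lerD|]|] => //.
  rewrite mulrCA; apply: ler_wpM2l => //; lra.
exact: le_trans s4 (ler_wpM2r f0 t).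
Qed.

Lemma part2_pos n k : (1 <= n)%N -> k != 0 -> disconnects F a b n k ->
  HM F a b origin <= 4 * (n%:R / (`|k| ^+ 2)%:~R).
Proof.
move=> n1 hk hd; apply: HM_le => m.
apply: le_trans (hstep_cmp D (part2_cond n1 hk hd) m (or_introl (S_origin n hk))) _.
rewrite /f2 /=.
have e0 : ((0:int)%:~R : R) = 0 by [].
rewrite e0 real_normK ?num_real // rmorphXn.
apply: fr_origin; first exact: ler0n.
have hk2 : k <> 0 by apply/eqP.
have : 1 <= k ^+ 2 by nia.
by rewrite -(ler_int R) rmorphXn.
Qed.


Lemma bedge_mem_in u x y : bedge F u (x,y) -> u \in nbrs (x,y).
Proof. by move/bedge_in; case=> [][-> _]; rewrite /nbrs !inE eqxx ?orbT. Qed.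

Ltac nb := rewrite /nbr /=; apply/eqP; lia.
Ltac nsg := rewrite /in_seg /=; apply/negP => /andP []; move/eqP => ?; first [ move=> _; lia | by [] | case/andP => ? ?; lia ].

Lemma F1 k B0 C : Sreach 0 k B0 -> (k,0) \in nbrs B0 -> Vb F (k,0) -> C \in nbrs (k,0) ->
  Vb F C -> Sreach 0 k C.
Proof.
move=> S0 hB0 vP hC vC.
have vU : Vb F (k,1) := Vb_up vP.
have SU : Sreach 0 k (k,1).
  move: S0 hB0; case: B0 => bx by' S0; rewrite /nbrs !inE => /or4P [] /eqP [e1 e2].
  - subst k; subst by'.
    have v1 := Vb_up (S_Vb S0).
    have S1 : Sreach 0 (bx+1) (bx,1) by apply: S_ext S0 v1 _ _; [nb | nsg].
    by apply: S_ext S1 vU _ _; [nb | nsg].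
  - subst k; subst by'.
    have v1 := Vb_up (S_Vb S0).
    have S1 : Sreach 0 (bx-1) (bx,1) by apply: S_ext S0 v1 _ _; [nb | nsg].
    by apply: S_ext S1 vU _ _; [nb | nsg].
  - have := Vb_y (S_Vb S0); rewrite /=; lia.
  - have -> : (k,1) = (bx,by') by congr (_,_); lia.
    exact: S0.
move: hC vC; rewrite /nbrs !inE => /or4P [] /eqP -> vC.
- have v1 := Vb_up vC.
  have S1 : Sreach 0 k (k+1,1) by apply: S_ext SU v1 _ _; [nb | nsg].
  by apply: S_ext S1 vC _ _; [nb | nsg].
- have v1 := Vb_up vC.
  have S1 : Sreach 0 k (k-1,1) by apply: S_ext SU v1 _ _; [nb | nsg].
  by apply: S_ext S1 vC _ _; [nb | nsg].
- by have -> : (0 + 1 : int) = 1 by [].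
- by have := Vb_y vC; rewrite /=.
Qed.

Definition Q0 k B := Sreach 0 k B \/
  (B = (k,0) /\ Vb F B /\ exists B0, Sreach 0 k B0 /\ B \in nbrs B0).

Lemma part2_zero_cond k : k != 0 -> disconnects F a b 0 k -> forall B, Q0 k B ->
  1 <= (fun _ => (0:R)) B \/
     [/\ ~ wired F a b B, 0 <= (fun _ => (0:R)) B &
        (Vb F B -> (forall C, C \in nbrs B -> Vb F C -> Q0 k C) /\
          \sum_(C <- nbrs B) (if `[< Vb F C >] then (fun _ => (0:R)) C else 0) <=
          (\sum_(C <- nbrs B) rate F a b C) * (fun _ => (0:R)) B)].
Proof.
move=> hk hd B hQ; right.
have hsum : \sum_(C <- nbrs B) (if `[< Vb F C >] then (fun _ => (0:R)) C else 0) <=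
          (\sum_(C <- nbrs B) rate F a b C) * (fun _ => (0:R)) B.
  by rewrite /= mulr0 big1 // => C _; case: ifP.
case: hQ => [hS | [eB [vB [B0 [S0 hB0]]]]].
- split=> //; first exact: S_nw hd hS.
  move=> vB; split=> // C hC vC.
  case hsC: (in_seg 0 k C); last first.
    by left; apply: S_ext hS vC (nbr_of_mem hC) _; rewrite hsC.
  right; move: hsC hC vC; case: C => cx cy; rewrite /in_seg /= => /andP [/eqP ecx /andP [h1 h2]] hC vC.
  have ecy : cy = 0 by lia.
  subst cx cy; split=> //; split=> //; by exists B.
- subst B; split=> //.
  + move=> hw; have [W [wW hW]] := wired_nbr D hw.
    have WinP : W \in nbrs (k,0).
      case: hW => e; first exact: bedge_mem e.
      exact: bedge_mem_in e.
    have SW := F1 S0 hB0 vB WinP (wired_Vb D wW).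
    exact: S_nw hd SW wW.
  + move=> _; split=> // C hC vC; left; exact: F1 S0 hB0 vB hC vC.
Qed.

Lemma part2_zero k : k != 0 -> disconnects F a b 0 k -> HM F a b origin <= 0.
Proof.
move=> hk hd; apply: HM_le => m.
exact: (hstep_cmp D (f := fun _ => 0) (part2_zero_cond hk hd) m (or_introl (S_origin 0 hk))).
Qed.

End Final.

Theorem lemma8 :
  exists c3 c4 : R, 0 < c3 /\ 0 < c4 /\
    forall (F : set Z2) (a b : Z2), dobrushinH F a b ->
      (0 < d1 F a b -> HM F a b origin <= c3 / d1 F a b) /\
      (forall (n : nat) (k : int), k != 0 -> disconnects F a b n k ->
         HM F a b origin <= c4 * (n%:R / (`|k| ^+ 2)%:~R)).
Proof.
exists 8, 4; split; first lra; split; first lra.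
move=> F a b D; split; first exact: part1 D.
move=> [|n] k hk hd.
  by rewrite mul0r mulr0; exact: (part2_zero D hk hd).
exact: part2_pos.
Qed.
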